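(* Let $q\ge2$ be an integer which is not a prime power. Then the interpolated fusion ring $\mathcal{R}_q$ is not (isomorphic as a fusion ring to) the Grothendieck ring of $\mathrm{Rep}(G)$ for any finite group $G$.
   Context: $\zeta_n=\exp(2\pi i/n)$. For integer $q\ge2$, $\mathcal{R}_q$ is the commutative fusion ring whose basis is the set of rows of the formal table $T_q$ below and whose structure constants are $N_{x,y}^z=\sum_s\lambda_{x,s}\lambda_{y,s}\overline{\lambda_{z,s}}/\mathfrak{c}_s$, $\mathfrak{c}_s=\sum_x|\lambda_{x,s}|^2$ (these form a commutative fusion ring with eigentable $T_q$, i.e. $T_q$ is the table of joint eigenvalues of the fusion matrices). Table $T_q$ (rows $x_{d,c}$; entries per row listed in the column order given): Case $q$ even. Columns: $C_0$; $C_1$; $A_k$ ($1\le k\le\frac{q-2}{2}$); $B_k$ ($1\le k\le\frac q2$). Rows: $x_{1,1}$: $1,1,1,1$. $x_{q-1,c}$ ($1\le c\le \frac q2$): $q-1,\,-1,\,0,\,-\zeta_{q+1}^{kc}-\zeta_{q+1}^{-kc}$. $x_{q,1}$: $q,0,1,-1$. $x_{q+1,c}$ ($1\le c\le\frac{q-2}{2}$): $q+1,\,1,\,\zeta_{q-1}^{kc}+\zeta_{q-1}^{-kc},\,0$. Case $q\equiv-1\pmod 4$. Columns: $C_0$; $D_k$ ($k\in\{1,2\}$); $A_k$ ($1\le k\le\frac{q-3}{4}$); $B_k$ ($1\le k\le\frac{q-3}{4}$); $E$ (with $k=\frac{q+1}{4}$). Rows: $x_{1,1}$: all $1$. $x_{\frac{q-1}{2},c}$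 ($c\in\{1,2\}$): $\frac{q-1}2,\ \frac{-1+i(-1)^{k+c}\sqrt q}{2},\ 0,\ (-1)^{k+1},\ (-1)^{k+1}$. $x_{q-1,c}$ ($1\le c\le\frac{q-3}4$): $q-1,\,-1,\,0,\,-\zeta_{q+1}^{2kc}-\zeta_{q+1}^{-2kc},\,-2(-1)^c$. $x_{q,1}$: $q,0,1,-1,-1$. $x_{q+1,c}$ ($1\le c\le\frac{q-3}4$): $q+1,\,1,\,\zeta_{q-1}^{2kc}+\zeta_{q-1}^{-2kc},\,0,\,0$. Case $q\equiv1\pmod4$. Columns: $C_0$; $D_k$ ($k\in\{1,2\}$); $A_k$ ($1\le k\le\frac{q-5}4$); $E$ (with $k=\frac{q-1}4$); $B_k$ ($1\le k\le\frac{q-1}4$). Rows: $x_{1,1}$: all $1$. $x_{\frac{q+1}2,c}$ ($c\in\{1,2\}$): $\frac{q+1}2,\ \frac{1+(-1)^{k+c}\sqrt q}{2},\ (-1)^k,\ (-1)^k,\ 0$. $x_{q-1,c}$ ($1\le c\le\frac{q-1}4$): $q-1,\,-1,\,0,\,0,\,-\zeta_{q+1}^{2kc}-\zeta_{q+1}^{-2kc}$. $x_{q,1}$: $q,0,1,1,-1$. $x_{q+1,c}$ ($1\le c\le\frac{q-5}4$): $q+1,\,1,\,\zeta_{q-1}^{2kc}+\zeta_{q-1}^{-2kc},\,2(-1)^c,\,0$. *)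

(* Defs.v *)
From HB Require Import structures.
From mathcomp Require Import all_boot all_order all_algebra all_fingroup all_solvable all_field all_character.
Set Implicit Arguments. Unset Strict Implicit. Unset Printing Implicit Defensive.
Import Order.TTheory GRing.Theory Num.Theory.
Local Open Scope ring_scope.

(* zeta n = exp(2 pi i / n).  In algC, n.-root (-1) is the n-th root of -1
   with nonnegative imaginary part and maximal real part, i.e. exp(i pi / n);
   its square is exp(2 pi i / n). *)
Definition zeta (n : nat) : algC := (n.-root (-1)) ^+ 2.

Definition zsum (n m : nat) : algC := zeta n ^+ m + zeta n ^- m.

(* Row labels of T_q (basis of R_q):
   Triv = x_{1,1}; Xm c = x_{q-1,c}; Xq = x_{q,1}; Xp c = x_{q+1,c};
   Xh c = x_{(q-1)/2,c} (q = -1 mod 4) or x_{(q+1)/2,c} (q = 1 mod 4). *)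
Inductive rowl := Triv | Xm of nat | Xq | Xp of nat | Xh of nat.

Inductive coll := C0 | C1 | Acol of nat | Bcol of nat | Dcol of nat | Ecol.

Lemma rowl_comparable : comparable rowl. Proof. rewrite /comparable /decidable; decide equality; apply: (@eq_comparable nat). Qed.
HB.instance Definition _ := comparableMixin rowl_comparable.
Lemma coll_comparable : comparable coll. Proof. rewrite /comparable /decidable; decide equality; apply: (@eq_comparable nat). Qed.
HB.instance Definition _ := comparableMixin coll_comparable.

Definition range1 (n : nat) : seq nat := iota 1 n.

Definition rows (q : nat) : seq rowl :=
  if ~~ odd q then
    [:: Triv] ++ map Xm (range1 (q %/ 2)%N) ++ [:: Xq] ++ map Xp (range1 ((q - 2) %/ 2)%N)
  else if (q %% 4 == 3)%N then
    [:: Triv] ++ map Xh (range1 2) ++ map Xm (range1 ((q - 3) %/ 4)%N) ++ [:: Xq]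
      ++ map Xp (range1 ((q - 3) %/ 4)%N)
  else
    [:: Triv] ++ map Xh (range1 2) ++ map Xm (range1 ((q - 1) %/ 4)%N) ++ [:: Xq]
      ++ map Xp (range1 ((q - 5) %/ 4)%N).

Definition cols (q : nat) : seq coll :=
  if ~~ odd q then
    [:: C0; C1] ++ map Acol (range1 ((q - 2) %/ 2)%N) ++ map Bcol (range1 (q %/ 2)%N)
  else if (q %% 4 == 3)%N then
    [:: C0] ++ map Dcol (range1 2) ++ map Acol (range1 ((q - 3) %/ 4)%N)
      ++ map Bcol (range1 ((q - 3) %/ 4)%N) ++ [:: Ecol]
  else
    [:: C0] ++ map Dcol (range1 2) ++ map Acol (range1 ((q - 5) %/ 4)%N) ++ [:: Ecol]
      ++ map Bcol (range1 ((q - 1) %/ 4)%N).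

Definition sgn (n : nat) : algC := (-1) ^+ n.

Definition lam (q : nat) (x : rowl) (s : coll) : algC :=
  if ~~ odd q then
    match x, s with
    | Triv, _ => 1
    | Xm c, C0 => (q - 1)%N%:R
    | Xm c, C1 => -1
    | Xm c, Acol k => 0
    | Xm c, Bcol k => - zsum q.+1 (k * c)%N
    | Xq, C0 => q%:R
    | Xq, C1 => 0
    | Xq, Acol k => 1
    | Xq, Bcol k => -1
    | Xp c, C0 => q.+1%:R
    | Xp c, C1 => 1
    | Xp c, Acol k => zsum (q - 1)%N (k * c)%N
    | Xp c, Bcol k => 0
    | _, _ => 0
    end
  else if (q %% 4 == 3)%N then
    match x, s with
    | Triv, _ => 1
    | Xh c, C0 => ((q - 1) %/ 2)%N%:R
    | Xh c, Dcol k => (-1 + 'i * sgn (k + c)%N * sqrtC q%:R) / 2%:R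
    | Xh c, Acol k => 0
    | Xh c, Bcol k => sgn k.+1
    | Xh c, Ecol => sgn (((q + 1) %/ 4).+1)%N
    | Xm c, C0 => (q - 1)%N%:R
    | Xm c, Dcol k => -1
    | Xm c, Acol k => 0
    | Xm c, Bcol k => - zsum q.+1 (2 * k * c)%N
    | Xm c, Ecol => - (2%:R * sgn c)
    | Xq, C0 => q%:R
    | Xq, Dcol k => 0
    | Xq, Acol k => 1
    | Xq, Bcol k => -1
    | Xq, Ecol => -1
    | Xp c, C0 => q.+1%:R
    | Xp c, Dcol k => 1
    | Xp c, Acol k => zsum (q - 1)%N (2 * k * c)%N
    | Xp c, Bcol k => 0
    | Xp c, Ecol => 0
    | _, _ => 0
    end
  else
    match x, s with
    | Triv, _ => 1
    | Xh c, C0 => ((q + 1) %/ 2)%N%:R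
    | Xh c, Dcol k => (1 + sgn (k + c)%N * sqrtC q%:R) / 2%:R
    | Xh c, Acol k => sgn k
    | Xh c, Ecol => sgn ((q - 1) %/ 4)%N
    | Xh c, Bcol k => 0
    | Xm c, C0 => (q - 1)%N%:R
    | Xm c, Dcol k => -1
    | Xm c, Acol k => 0
    | Xm c, Ecol => 0
    | Xm c, Bcol k => - zsum q.+1 (2 * k * c)%N
    | Xq, C0 => q%:R
    | Xq, Dcol k => 0
    | Xq, Acol k => 1
    | Xq, Ecol => 1
    | Xq, Bcol k => -1
    | Xp c, C0 => q.+1%:R
    | Xp c, Dcol k => 1
    | Xp c, Acol k => zsum (q - 1)%N (2 * k * c)%N
    | Xp c, Ecol => 2%:R * sgn c
    | Xp c, Bcol k => 0
    | _, _ => 0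
    end.

Definition cnorm (q : nat) (s : coll) : algC :=
  \sum_(x <- rows q) `|lam q x s| ^+ 2.

Definition Nfus (q : nat) (x y z : rowl) : algC :=
  \sum_(s <- cols q) lam q x s * lam q y s * (lam q z s)^* / cnorm q s.

Definition fusion_iso_Rep (q : nat) (gT : finGroupType) (G : {group gT}) : Prop :=
  exists f : rowl -> Iirr G,
    [/\ {in rows q &, injective f},
        (forall i : Iirr G, exists2 x, x \in rows q & f x = i)
      & {in rows q & &, forall x y z,
           Nfus q x y z = '['chi_(f x) * 'chi_(f y), 'chi_(f z)]_G}].

(* Main.v *)
Require Import Defs.
From HB Require Import structures.
From mathcomp Require Import all_boot all_order all_algebra all_fingroup all_solvable all_field all_character.
From mathcomp Require Import ring lra zify.

Module Helpers.
Set Implicit Arguments. Unset Strict Implicit. Unset Printing Implicit Defensive.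
Import Order.TTheory GRing.Theory Num.Theory.
Local Open Scope ring_scope.


Lemma sum_reindex q (gT : finGroupType) (G : {group gT}) (f : rowl -> Iirr G) :
  uniq (rows q) -> {in rows q &, injective f} ->
  (forall i : Iirr G, exists2 x, x \in rows q & f x = i) ->
  forall F : Iirr G -> algC, \sum_i F i = \sum_(x <- rows q) F (f x).
Proof.
move=> uR injf surjf F; rewrite -(big_map f xpredT).
apply: perm_big; apply: uniq_perm; first exact: index_enum_uniq.
  by rewrite map_inj_in_uniq.
move=> i; rewrite mem_index_enum; have [x xR <-] := surjf i.
by rewrite map_f.
Qed.

Definition uu q (gT : finGroupType) (G : {group gT}) (f : rowl -> Iirr G) (g : gT) (s : coll) : algC :=
  (\sum_(z <- rows q) (lam q z s)^* * 'chi_(f z) g) / cnorm q s.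

Lemma prod_expand q (gT : finGroupType) (G : {group gT}) (f : rowl -> Iirr G) :
  uniq (rows q) -> {in rows q &, injective f} ->
  (forall i : Iirr G, exists2 x, x \in rows q & f x = i) ->
  {in rows q & &, forall x y z,
           Nfus q x y z = '['chi_(f x) * 'chi_(f y), 'chi_(f z)]_G} ->
  forall g x y, x \in rows q -> y \in rows q ->
  'chi_(f x) g * 'chi_(f y) g = \sum_(s <- cols q) lam q x s * lam q y s * uu q f g s.
Proof.
move=> uR injf surjf HN g x y xR yR.
have := congr1 (fun phi : 'CF(G) => phi g) (cfun_sum_cfdot ('chi_(f x) * 'chi_(f y))).
rewrite cfunE sum_cfunE => ->.
rewrite (sum_reindex uR injf surjf (fun i => ('['chi_(f x) * 'chi_(f y), 'chi_i] *: 'chi_i) g)).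
rewrite big_seq_cond.
under eq_bigr => z /andP[zR _] do rewrite cfunE -HN // /Nfus mulr_suml.
rewrite -big_seq_cond exchange_big /=; apply: eq_bigr => s _.
rewrite /uu mulr_suml mulr_sumr; apply: eq_bigr => z _.
by rewrite mulrC !mulrA; ring.
Qed.


Lemma sum_cols_ord q n (F : coll -> algC) : size (cols q) = n ->
  \sum_(s <- cols q) F s = \sum_(j < n) F (nth C0 (cols q) j).
Proof. by move=> <-; rewrite (big_nth C0) big_mkord. Qed.

Lemma sum_rows_ord q n (F : rowl -> algC) : size (rows q) = n ->
  \sum_(s <- rows q) F s = \sum_(j < n) F (nth Triv (rows q) j).
Proof. by move=> <-; rewrite (big_nth Triv) big_mkord. Qed.

Lemma left_inv q (gT : finGroupType) (G : {group gT}) (f : rowl -> Iirr G) :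
  uniq (rows q) -> size (rows q) = size (cols q) -> {in rows q &, injective f} ->
  (forall i : Iirr G, exists2 x, x \in rows q & f x = i) ->
  {in rows q & &, forall x y z,
           Nfus q x y z = '['chi_(f x) * 'chi_(f y), 'chi_(f z)]_G} ->
  forall z : coll -> algC,
    (forall y, y \in rows q -> \sum_(s <- cols q) lam q y s * z s = 0) ->
    forall s, s \in cols q -> z s = 0.
Proof.
move=> uR sRS injf surjf HN z Hz s sS.
have [x0 x0R fx0] := surjf 0.
pose w g s := lam q x0 s * uu q f g s.
have HC g y : g \in G -> y \in rows q -> 'chi_(f y) g = \sum_(s <- cols q) lam q y s * w g s.
  move=> Gg yR; have := prod_expand uR injf surjf HN g x0R yR.
  rewrite fx0 irr0 cfun1E Gg mul1r => ->; apply: eq_bigr => t _; rewrite /w; ring.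
pose n := size (rows q).
pose rx (i : 'I_n) := nth Triv (rows q) i.
pose cs (j : 'I_n) := nth C0 (cols q) j.
have rxR (i : 'I_n) : rx i \in rows q by rewrite mem_nth.
pose Tm : 'M[algC]_n := \matrix_(i, j) lam q (rx i) (cs j).
pose Bm : 'M[algC]_n := \matrix_(j, i)
   (#|G|%:R^-1 * \sum_(g in G) w g (cs j) * ('chi_(f (rx i)) g)^*).
have TB : Tm *m Bm = 1%:M.
  apply/matrixP => i i'; rewrite !mxE.
  under eq_bigr => j _ do rewrite !mxE mulrCA mulr_sumr.
  rewrite -mulr_sumr exchange_big /=.
  transitivity ('['chi_(f (rx i)), 'chi_(f (rx i'))]_G).
    rewrite cfdotE; congr (_ * _); apply: eq_bigr => g Gg.
    rewrite (HC g (rx i) Gg (rxR i)) (sum_cols_ord _ (esym sRS)) mulr_suml.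
    apply: eq_bigr => j _; rewrite /cs; ring.
  rewrite cfdot_irr.
  have [-> | nii] := eqVneq i i'; first by rewrite !eqxx.
  suff -> : (f (rx i) == f (rx i')) = false by [].
  apply: negbTE; apply: contra nii => /eqP E.
  have E' := injf _ _ (rxR i) (rxR i') E.
  by apply/eqP/val_inj/eqP; rewrite /= -(nth_uniq Triv _ _ uR) ?ltn_ord //; apply/eqP; exact: E'.
have BT := mulmx1C TB.
have ls : (index s (cols q) < n)%N by rewrite /n sRS index_mem.
pose j0 := Ordinal ls.
have -> : z s = z (cs j0) by rewrite /cs /= nth_index.
transitivity (\sum_(j < n) (Bm *m Tm) j0 j * z (cs j)).
  rewrite BT (bigD1 j0) //= big1 => [|j nj]; first by rewrite mxE eqxx mul1r addr0.
  by rewrite mxE eq_sym (negPf nj) mul0r.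
under eq_bigr => j _ do rewrite mxE mulr_suml.
rewrite exchange_big /= big1 // => i _.
transitivity (Bm j0 i * \sum_(s <- cols q) lam q (rx i) s * z s); last by rewrite Hz ?rxR ?mulr0.
rewrite (sum_cols_ord _ (esym sRS)) mulr_sumr.
apply: eq_bigr => j _; rewrite !mxE /cs; ring.
Qed.


Lemma lamTriv q s : lam q Triv s = 1.
Proof. by rewrite /lam; case: ifP => _ //; case: ifP. Qed.

Lemma colvec q (gT : finGroupType) (G : {group gT}) (f : rowl -> Iirr G) :
  uniq (rows q) -> size (rows q) = size (cols q) -> {in rows q &, injective f} ->
  (forall i : Iirr G, exists2 x, x \in rows q & f x = i) ->
  {in rows q & &, forall x y z,
           Nfus q x y z = '['chi_(f x) * 'chi_(f y), 'chi_(f z)]_G} ->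
  Triv \in rows q ->
  (forall s, s \in cols q -> s != C0 -> exists2 x, x \in rows q & ~~ (0 < lam q x s)) ->
  (forall x, x \in rows q -> x != Triv -> 1 < lam q x C0) ->
  forall g, g \in G -> exists2 s, s \in cols q &
     forall x, x \in rows q -> 'chi_(f x) g = lam q x s.
Proof.
move=> uR sRS injf surjf HN TR L4 L5.
have [x0 x0R fx0] := surjf 0.
pose w g s := lam q x0 s * uu q f g s.
have HC g y : g \in G -> y \in rows q -> 'chi_(f y) g = \sum_(s <- cols q) lam q y s * w g s.
  move=> Gg yR; have := prod_expand uR injf surjf HN g x0R yR.
  rewrite fx0 irr0 cfun1E Gg mul1r => ->; apply: eq_bigr => t _; rewrite /w; ring.
have HE g x s : g \in G -> x \in rows q -> s \in cols q ->
    lam q x s * uu q f g s = 'chi_(f x) g * w g s.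
  move=> Gg xR sS; apply/eqP; rewrite -subr_eq0; apply/eqP.
  apply: (left_inv uR sRS injf surjf HN (z := fun s => lam q x s * uu q f g s - 'chi_(f x) g * w g s)) => // y yR.
  under eq_bigr => t _ do rewrite mulrBr.
  rewrite sumrB.
  have -> : \sum_(i <- cols q) lam q y i * (lam q x i * uu q f g i) = 'chi_(f x) g * 'chi_(f y) g.
    by rewrite (prod_expand uR injf surjf HN g xR yR); apply: eq_bigr => t _; ring.
  have -> : \sum_(i <- cols q) lam q y i * ('chi_(f x) g * w g i) = 'chi_(f x) g * 'chi_(f y) g.
    by rewrite (HC g y Gg yR) mulr_sumr; apply: eq_bigr => t _; ring.
  by rewrite subrr.
have HF g : g \in G -> exists2 s, s \in cols q &
     forall x, x \in rows q -> lam q x s = 'chi_(f x) g * lam q x0 s.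
  move=> Gg.
  have : has (fun s => w g s != 0) (cols q).
    apply/negPn/negP => /hasPn H; move: (HC g x0 Gg x0R).
    rewrite fx0 irr0 cfun1E Gg big1_seq => [/eqP|s /andP[_ sS]]; first by rewrite oner_eq0.
    by move/negPn: (H s sS) => /eqP ->; rewrite mulr0.
  case/hasP => s sS ws; exists s => // x xR.
  have unz : uu q f g s != 0 by apply: contraNneq ws => E; rewrite /w E mulr0.
  apply: (mulIf unz); rewrite HE // /w; ring.
have x0T : x0 = Triv.
  have [s sS Hs] := HF 1%g (group1 G).
  have dT := Hs Triv TR; rewrite lamTriv in dT.
  have dTpos := irr1_gt0 (f Triv).
  have lpos : 0 < lam q x0 s.
    have : 0 < 'chi_(f Triv) 1%g * lam q x0 s by rewrite -dT ltr01.
    by rewrite pmulr_rgt0.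
  have sC0 : s = C0.
    apply/eqP; apply/negP => /negP ns; have [x xR /negP] := L4 s sS ns; apply.
    by rewrite Hs // mulr_gt0 // irr1_gt0.
  subst s; apply/eqP/negP => /negP nx; have := L5 x0 x0R nx.
  have dT1 : 1 <= 'chi_(f Triv) 1%g.
    have /natrP[n En] := Cnat_irr1 (f Triv); rewrite En ler1n -(ltr0n algC) -En //.
  move=> lg1; have : 1 < 'chi_(f Triv) 1%g * lam q x0 C0.
    apply: (lt_le_trans lg1); apply: ler_peMl => //; exact: ltW.
  by rewrite -dT ltxx.
move=> g Gg; have [s sS Hs] := HF g Gg; exists s => // x xR.
by rewrite Hs // x0T lamTriv mulr1.
Qed.


Lemma final q (gT : finGroupType) (G : {group gT}) (f : rowl -> Iirr G) :
  uniq (rows q) -> size (rows q) = size (cols q) -> {in rows q &, injective f} ->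
  (forall i : Iirr G, exists2 x, x \in rows q & f x = i) ->
  {in rows q & &, forall x y z,
           Nfus q x y z = '['chi_(f x) * 'chi_(f y), 'chi_(f z)]_G} ->
  Triv \in rows q ->
  (forall s, s \in cols q -> s != C0 -> exists2 x, x \in rows q & ~~ (0 < lam q x s)) ->
  (forall x, x \in rows q -> x != Triv -> 1 < lam q x C0) ->
  Xq \in rows q -> (0 < q)%N ->
  forall K : nat,
  \sum_(x <- rows q) lam q x C0 ^+ 2 = (q * K)%:R ->
  (forall p, prime p -> p %| q -> ~~ (p %| K))%N ->
  lam q Xq C0 = q%:R ->
  (forall s, s \in cols q -> s != C0 -> lam q Xq s = 0 \/ lam q Xq s = 1 \/ lam q Xq s = -1) ->
  (exists s1 s2, forall s, s \in cols q -> s != C0 -> lam q Xq s = 0 -> s = s1 \/ s = s2) ->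
  (forall s, s \in cols q -> s != C0 -> lam q Xq s = 0 -> cnorm q s = q%:R) ->
  forall p r, prime p -> prime r -> (p %| q)%N -> (r %| q)%N -> p != r -> False.
Proof.
move=> uR sRS injf surjf HN TR L4 L5 XqR q0 K Hord Hcop LXq0 L7 [s1 [s2 L8]] L9
  p r pp pr pq rq pnr.
have Key := colvec uR sRS injf surjf HN TR L4 L5.
have reidx := sum_reindex uR injf surjf.
have deg x : x \in rows q -> 'chi_(f x) 1%g = lam q x C0.
  have [s sS Hs] := Key 1%g (group1 G).
  have sC : s = C0.
    apply/eqP; apply/negP => /negP ns; have [y yR /negP] := L4 s sS ns; apply.
    by rewrite -Hs // irr1_gt0.
  by move=> xR; rewrite Hs // sC.
have cardG : #|G| = (q * K)%N.
  apply/eqP; rewrite -(eqr_nat algC) -irr_sum_square reidx -Hord; apply/eqP.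
  by rewrite big_seq [RHS]big_seq; apply: eq_bigr => x xR; rewrite deg.
have sep a b : a \in G -> b \in G -> (forall x, x \in rows q -> 'chi_(f x) a = 'chi_(f x) b) ->
    #[a]%g = #[b]%g.
  move=> Ga Gb Hab.
  have := second_orthogonality_relation a Gb.
  have -> : \sum_i 'chi[G]_i a * ('chi_i b)^* = \sum_i 'chi[G]_i a * ('chi_i a)^*.
    rewrite !reidx big_seq [RHS]big_seq; apply: eq_bigr => x xR; by rewrite Hab.
  rewrite second_orthogonality_relation // class_refl.
  case: (boolP (a \in (b ^: G)%g)) => [/imsetP[y _ ->] _| _]; first by rewrite orderJ.
  by rewrite mulr1n mulr0n => /eqP; rewrite (negPf (neq0CG _)).
have cent a s : a \in G -> (forall x, x \in rows q -> 'chi_(f x) a = lam q x s) ->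
    #|'C_G[a]%g|%:R = cnorm q s.
  move=> Ga Hs; have := second_orthogonality_relation a Ga.
  rewrite class_refl mulr1n => <-; rewrite reidx /cnorm big_seq [RHS]big_seq.
  by apply: eq_bigr => x xR; rewrite normCK Hs.
have special a l : a \in G -> prime l -> (l %| q)%N -> (l %| #[a]%g)%N ->
    exists2 s, s \in cols q & [/\ s != C0, lam q Xq s = 0 &
      forall x, x \in rows q -> 'chi_(f x) a = lam q x s].
  move=> Ga pl lq la; have [s sS Hs] := Key a Ga; exists s => //.
  have sC0 : s != C0.
    apply/eqP => E; subst s.
    have : #[a]%g = #[1%g : gT]%g by apply: sep; rewrite ?group1 // => x xR; rewrite Hs // deg.
    move=> E; rewrite E order1 in la.
    by move: (prime_gt1 pl); rewrite ltnNge dvdn_leq.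
  split => //.
  have lC : (l %| #|'C_G[a]%g|)%N.
    apply: dvdn_trans la _; apply: cardSg; rewrite cycle_subG; apply/setIP; split => //.
    exact: cent1id.
  have [//|L1] := L7 s sS sC0; exfalso.
  have hA := Aint_class_div_irr1 (f Xq) Ga.
  rewrite Hs // deg // LXq0 in hA.
  have hA' : #|(a ^: G)%g|%:R / q%:R \in Aint.
    by case: L1 => E; move: hA; rewrite E ?mulr1 // mulrN1 mulNr rpredN.
  have qdiv : (q %| #|(a ^: G)%g|)%N.
    rewrite -dvdC_nat unfold_in pnatr_eq0 (gtn_eqF q0) /=.
    by rewrite Cint_rat_Aint // rpred_div // rpred_nat.
  have : (#|'C_G[a]%g| * #|(a ^: G)%g|)%N = (q * K)%N.
    by rewrite -index_cent1 Lagrange ?subsetIl.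
  case/dvdnP: qdiv => m ->; rewrite mulnA [(q * K)%N]mulnC => /eqP.
  rewrite eqn_mul2r (gtn_eqF q0) /= => /eqP EK.
  by move: (Hcop l pl lq); rewrite -EK dvdn_mulr.
have [g Gg og] : {g | g \in G & #[g]%g = p}.
  by apply: Cauchy => //; rewrite cardG dvdn_mulr.
have pg : (p %| #[g]%g)%N by rewrite og.
have [sg sgS [sgC sg0 Hg]] := special g p Gg pp pq pg.
have cg : #|'C_G[g]%g| = q.
  by apply/eqP; rewrite -(eqr_nat algC) (cent g sg) // L9.
have [h Ch oh] : {h | h \in 'C_G[g]%g & #[h]%g = r}.
  by apply: Cauchy => //; rewrite cg.
have Gh : h \in G by case/setIP: Ch.
have cgh : commute g h by case/setIP: Ch => _ /cent1P.
have ogh : #[g * h]%g = (p * r)%N.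
  have cop : coprime #[g]%g #[h]%g by rewrite og oh prime_coprime // dvdn_prime2.
  by rewrite orderM // og oh.
have Ggh : (g * h)%g \in G by rewrite groupM.
have rh : (r %| #[h]%g)%N by rewrite oh.
have [sh shS [shC sh0 Hh]] := special h r Gh pr rq rh.
have pgh : (p %| #[g * h]%g)%N by rewrite ogh dvdn_mulr.
have [sgh sghS [sghC sgh0 Hgh]] := special (g * h)%g p Ggh pp pq pgh.
have same a b s : a \in G -> b \in G -> (forall x, x \in rows q -> 'chi_(f x) a = lam q x s) ->
   (forall x, x \in rows q -> 'chi_(f x) b = lam q x s) -> #[a]%g = #[b]%g.
  by move=> Ga Gb Ha Hb; apply: sep => // x xR; rewrite Ha // Hb.
have p1 := prime_gt1 pp; have r1 := prime_gt1 pr.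
have npr : (p != p * r)%N by rewrite -{1}[p]muln1 eqn_mul2l negb_or gtn_eqF ?prime_gt0 // eq_sym gtn_eqF.
have rpr : (r != p * r)%N by rewrite -{1}[r]mul1n eqn_mul2r negb_or gtn_eqF ?prime_gt0 // eq_sym gtn_eqF.
case: (L8 sg sgS sgC sg0) => Eg; case: (L8 sh shS shC sh0) => Eh;
  case: (L8 sgh sghS sghC sgh0) => Egh; move: Hg Hh Hgh; rewrite Eg Eh Egh => Hg Hh Hgh.
- by move: (same _ _ _ Gg Gh Hg Hh); rewrite og oh => E; rewrite E eqxx in pnr.
- by move: (same _ _ _ Gg Gh Hg Hh); rewrite og oh => E; rewrite E eqxx in pnr.
- by move: (same _ _ _ Gg Ggh Hg Hgh); rewrite og ogh => E; rewrite -E eqxx in npr.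
- by move: (same _ _ _ Gh Ggh Hh Hgh); rewrite oh ogh => E; rewrite -E eqxx in rpr.
- by move: (same _ _ _ Gh Ggh Hh Hgh); rewrite oh ogh => E; rewrite -E eqxx in rpr.
- by move: (same _ _ _ Gg Ggh Hg Hgh); rewrite og ogh => E; rewrite -E eqxx in npr.
- by move: (same _ _ _ Gg Gh Hg Hh); rewrite og oh => E; rewrite E eqxx in pnr.
- by move: (same _ _ _ Gg Gh Hg Hh); rewrite og oh => E; rewrite E eqxx in pnr.
Qed.

Definition Facts q : Prop :=
  uniq (rows q) /\ size (rows q) = size (cols q) /\ Triv \in rows q /\
  (forall s, s \in cols q -> s != C0 -> exists2 x, x \in rows q & ~~ (0 < lam q x s)) /\
  (forall x, x \in rows q -> x != Triv -> 1 < lam q x C0) /\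
  Xq \in rows q /\ (0 < q)%N /\
  (exists K : nat, \sum_(x <- rows q) lam q x C0 ^+ 2 = (q * K)%:R /\
     (forall p, prime p -> p %| q -> ~~ (p %| K))%N) /\
  lam q Xq C0 = q%:R /\
  (forall s, s \in cols q -> s != C0 -> lam q Xq s = 0 \/ lam q Xq s = 1 \/ lam q Xq s = -1) /\
  (exists s1 s2, forall s, s \in cols q -> s != C0 -> lam q Xq s = 0 -> s = s1 \/ s = s2) /\
  (forall s, s \in cols q -> s != C0 -> lam q Xq s = 0 -> cnorm q s = q%:R).

Lemma final' q (gT : finGroupType) (G : {group gT}) (f : rowl -> Iirr G) :
  Facts q -> {in rows q &, injective f} ->
  (forall i : Iirr G, exists2 x, x \in rows q & f x = i) ->
  {in rows q & &, forall x y z,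
           Nfus q x y z = '['chi_(f x) * 'chi_(f y), 'chi_(f z)]_G} ->
  forall p r, prime p -> prime r -> (p %| q)%N -> (r %| q)%N -> p != r -> False.
Proof.
move=> [uR [sRS [TR [L4 [L5 [XqR [q0 [[K [Hord Hcop]] [LXq0 [L7 [L8 L9]]]]]]]]]]] injf surjf HN.
exact: (final uR sRS injf surjf HN TR L4 L5 XqR q0 Hord Hcop LXq0 L7 L8 L9).
Qed.


Definition rgen a b c : seq rowl :=
  [:: Triv] ++ map Xh (range1 a) ++ map Xm (range1 b) ++ [:: Xq] ++ map Xp (range1 c).

Lemma notin_map (f : nat -> rowl) x r : (forall c, x <> f c) -> (x \in map f r) = false.
Proof. by move=> H; apply/negP => /mapP[c _ E]; exact: (H c E). Qed.

Lemma uniq_range1 n : uniq (range1 n). Proof. exact: iota_uniq. Qed.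

Lemma uniq_rgen a b c : uniq (rgen a b c).
Proof.
rewrite /rgen /= !cat_uniq /= !mem_cat !inE !notin_map // ?andbT.
have tq : (Triv == Xq) = false by case: eqP.
rewrite tq /= !map_inj_uniq ?uniq_range1 ?andbT; try by move=> ? ? [].
apply/and3P; split => //.
  apply/hasPn => x; rewrite mem_cat in_cons => /orP[/mapP[k _ ->] | /orP[/eqP -> | /mapP[k _ ->]]];
  by apply/negbT/notin_map.
by apply/hasPn => x /mapP[k _ ->]; apply/negbT/notin_map.
Qed.

Lemma mem_rgen a b c x : x \in rgen a b c ->
  x = Triv \/ (exists2 k, x = Xh k & (1 <= k <= a)%N) \/ (exists k, x = Xm k) \/ x = Xq \/ (exists k, x = Xp k).
Proof.
rewrite /rgen !mem_cat !inE => /orP[/eqP->|/orP[/mapP[k kr ->]|/orP[/mapP[k _ ->]|/orP[/eqP->|/mapP[k _ ->]]]]].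
- by left.
- right; left; exists k => //; move: kr; rewrite /range1 mem_iota; lia.
- by right; right; left; exists k.
- by right; right; right; left.
- by right; right; right; right; exists k.
Qed.

Lemma sum_const_seq (T : Type) (r : seq T) (a : algC) : \sum_(i <- r) a = a *+ size r.
Proof. by elim: r => [|x r IH]; rewrite ?big_nil ?big_cons ?IH ?mulrS. Qed.

Lemma sum_rgen a b c (F : rowl -> algC) : \sum_(x <- rgen a b c) F x =
  F Triv + \sum_(k <- range1 a) F (Xh k) + \sum_(k <- range1 b) F (Xm k) + F Xq
   + \sum_(k <- range1 c) F (Xp k).
Proof. by rewrite /rgen !big_cat /= !big_map !big_cons !big_nil !addr0 !addrA. Qed.
Lemma sgnS j : sgn j.+1 = - sgn j. Proof. by rewrite /sgn exprS mulN1r. Qed.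
Lemma sgn_sq j : sgn j ^+ 2 = 1. Proof. by rewrite /sgn -exprM mulnC exprM sqrrN expr1n expr1n. Qed.
Lemma sgn_real j : sgn j \is Num.real. Proof. by rewrite /sgn rpredX ?rpredN ?rpred1. Qed.

Lemma nrmD3 j (x : algC) : 0 <= x ->
  `|(-1 + 'i * sgn j * sqrtC x) / 2%:R| ^+ 2 = (1 + x) / 4%:R.
Proof.
move=> hx.
have -> : (-1 + 'i * sgn j * sqrtC x) / 2%:R = (- 1 / 2%:R) + 'i * (sgn j * sqrtC x / 2%:R) by ring.
rewrite normC2_rect ?rpredM ?rpredV ?rpredN ?rpred1 ?rpred_nat ?sgn_real ?sqrtC_real //.
rewrite !exprMn sgn_sq sqrtCK; field; by rewrite ?pnatr_eq0.
Qed.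

Lemma nrmD1 (e x : algC) : 0 <= x -> e ^+ 2 = 1 -> e \is Num.real ->
  `|(1 + e * sqrtC x) / 2%:R| ^+ 2 + `|(1 + - e * sqrtC x) / 2%:R| ^+ 2 = (1 + x) / 2%:R.
Proof.
move=> hx he er.
have sr := sqrtC_real hx.
have r1 : (1 + e * sqrtC x) / 2%:R \is Num.real by rewrite rpredM ?rpredV ?rpredD ?rpredM ?rpred1 ?rpred_nat.
have r2 : (1 + - e * sqrtC x) / 2%:R \is Num.real by rewrite rpredM ?rpredV ?rpredD ?rpredM ?rpredN ?rpred1 ?rpred_nat.
rewrite !real_normK //.
have -> : ((1 + e * sqrtC x) / 2%:R) ^+ 2 + ((1 + - e * sqrtC x) / 2%:R) ^+ 2
   = (1 + e ^+ 2 * sqrtC x ^+ 2) / 2%:R by field; rewrite ?pnatr_eq0.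
by rewrite he sqrtCK mul1r.
Qed.


Section Even.
Variables (q n : nat).
Hypothesis hq : q = (2 * (n + 3))%N.

Let Hev : odd q = false. Proof. by rewrite hq oddM. Qed.

Lemma rowsE_ev : rows q = rgen 0 (n + 3) (n + 2).
Proof.
have h1 : (q %/ 2 = n + 3)%N by rewrite hq mulKn.
have h2 : ((q - 2) %/ 2 = n + 2)%N.
  by rewrite (_ : (q - 2 = 2 * (n + 2))%N) ?mulKn //; lia.
by rewrite /rows Hev /= h1 h2.
Qed.

Lemma colsE_ev : cols q = [:: C0; C1] ++ map Acol (range1 (n + 2)) ++ map Bcol (range1 (n + 3)).
Proof.
have h1 : (q %/ 2 = n + 3)%N by rewrite hq mulKn.
have h2 : ((q - 2) %/ 2 = n + 2)%N.
  by rewrite (_ : (q - 2 = 2 * (n + 2))%N) ?mulKn //; lia.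
by rewrite /cols Hev /= h1 h2.
Qed.

Lemma mem_cols_ev s : s \in cols q ->
  s = C0 \/ s = C1 \/ (exists k, s = Acol k) \/ (exists k, s = Bcol k).
Proof.
rewrite colsE_ev !mem_cat !inE => /orP[/orP[/eqP->|/eqP->]|/orP[/mapP[k _ ->]|/mapP[k _ ->]]].
- by left.
- by right; left.
- by right; right; left; exists k.
- by right; right; right; exists k.
Qed.

Lemma ev_uniq : uniq (rows q). Proof. by rewrite rowsE_ev uniq_rgen. Qed.

Lemma ev_size : size (rows q) = size (cols q).
Proof. rewrite rowsE_ev colsE_ev /rgen !size_cat !size_map /range1 !size_iota /=; lia. Qed.

Lemma ev_Triv : Triv \in rows q. Proof. by rewrite rowsE_ev /rgen !mem_cat !inE eqxx. Qed.
Lemma ev_Xq : Xq \in rows q. Proof. by rewrite rowsE_ev /rgen !mem_cat !inE eqxx !orbT. Qed.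

Lemma ev_L4 s : s \in cols q -> s != C0 -> exists2 x, x \in rows q & ~~ (0 < lam q x s).
Proof.
move=> /mem_cols_ev [->|[->|[[k ->]|[k ->]]]]; rewrite ?eqxx // => _.
- by exists Xq; [exact: ev_Xq | rewrite /lam Hev /= ltxx].
- exists (Xm 1); last by rewrite /lam Hev /= ltxx.
  by rewrite rowsE_ev /rgen !mem_cat map_f ?orbT // /range1 mem_iota; lia.
- by exists Xq; [exact: ev_Xq | rewrite /lam Hev /= ltr0N1].
Qed.

Lemma ev_L5 x : x \in rows q -> x != Triv -> 1 < lam q x C0.
Proof.
rewrite rowsE_ev => /mem_rgen [->|[[k -> /andP[k1 k0]]|[[k ->]|[->|[k ->]]]]]; rewrite ?eqxx // => _.
- by move: k1 k0; lia.
- by rewrite /lam Hev /= ltr1n hq; lia.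
- by rewrite /lam Hev /= ltr1n hq; lia.
- by rewrite /lam Hev /= ltr1n hq; lia.
Qed.

Lemma ev_ord : \sum_(x <- rows q) lam q x C0 ^+ 2 = (q * ((2 * n + 5) * (2 * n + 7)))%:R.
Proof.
rewrite rowsE_ev sum_rgen /range1 /= big_nil /lam Hev /= !sum_const_seq !size_iota.
rewrite -!natrX -!mulrnA expr1n addr0 (_ : 1 = 1%:R) // -!natrD; congr (_ %:R).
rewrite hq (_ : (2 * (n + 3) - 1 = 2 * n + 5)%N); last by lia.
nia.
Qed.

Lemma ev_cop p : prime p -> (p %| q)%N -> ~~ (p %| (2 * n + 5) * (2 * n + 7))%N.
Proof.
move=> pp pq; rewrite Euclid_dvdM //; rewrite hq in pq; apply/negP => /orP[H|H].
- move: pq; rewrite (_ : (2 * (n + 3) = (2 * n + 5) + 1)%N); last by lia.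
  by rewrite dvdn_addr // dvdn1 => /eqP E; move: (prime_gt1 pp); rewrite E.
- move: H; rewrite (_ : (2 * n + 7 = 2 * (n + 3) + 1)%N); last by lia.
  by rewrite dvdn_addr // dvdn1 => /eqP E; move: (prime_gt1 pp); rewrite E.
Qed.

Lemma ev_Xq0 : lam q Xq C0 = q%:R. Proof. by rewrite /lam Hev. Qed.

Lemma ev_L7 s : s \in cols q -> s != C0 -> lam q Xq s = 0 \/ lam q Xq s = 1 \/ lam q Xq s = -1.
Proof.
move=> /mem_cols_ev [->|[->|[[k ->]|[k ->]]]]; rewrite ?eqxx // => _; rewrite /lam Hev /=; by auto.
Qed.

Lemma ev_L8 : exists s1 s2, forall s, s \in cols q -> s != C0 -> lam q Xq s = 0 -> s = s1 \/ s = s2.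
Proof.
exists C1, C1 => s /mem_cols_ev [->|[->|[[k ->]|[k ->]]]]; rewrite ?eqxx // => _; rewrite /lam Hev /=; auto.
- by move/eqP; rewrite oner_eq0.
- by move/eqP; rewrite oppr_eq0 oner_eq0.
Qed.

Lemma ev_L9 s : s \in cols q -> s != C0 -> lam q Xq s = 0 -> cnorm q s = q%:R.
Proof.
move=> /mem_cols_ev [->|[->|[[k ->]|[k ->]]]]; rewrite ?eqxx // => _; rewrite /lam Hev /=.
- move=> _; rewrite /cnorm rowsE_ev sum_rgen /range1 /= big_nil /lam Hev /= !sum_const_seq !size_iota.
  rewrite normrN1 normr0 normr1 !expr1n expr0n /= !addr0 (_ : 1 = 1%:R) // -!natrD hq; congr (_ %:R); lia.
- by move/eqP; rewrite oner_eq0.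
- by move/eqP; rewrite oppr_eq0 oner_eq0.
Qed.

Lemma ev_facts : Facts q.
Proof.
split; first exact: ev_uniq. split; first exact: ev_size.
split; first exact: ev_Triv. split; first exact: ev_L4.
split; first exact: ev_L5. split; first exact: ev_Xq.
split; first by rewrite hq; lia.
split; first by exists ((2 * n + 5) * (2 * n + 7)); split; [exact: ev_ord | exact: ev_cop].
split; first exact: ev_Xq0. split; first exact: ev_L7.
split; first exact: ev_L8. exact: ev_L9.
Qed.

End Even.


Section Three.
Variables (q m : nat).
Hypothesis hq : q = (4 * m + 3)%N.
Hypothesis m1 : (1 <= m)%N.

Let Hod : odd q = true. Proof. by rewrite hq oddD oddM. Qed.
Let Hmod : (q %% 4 == 3)%N = true. Proof. by rewrite hq mulnC modnMDl. Qed.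

Lemma rowsE_3 : rows q = rgen 2 m m.
Proof.
have h1 : ((q - 3) %/ 4 = m)%N by rewrite hq addnK mulKn.
by rewrite /rows Hod Hmod /= h1.
Qed.

Lemma colsE_3 : cols q = [:: C0] ++ map Dcol (range1 2) ++ map Acol (range1 m)
      ++ map Bcol (range1 m) ++ [:: Ecol].
Proof.
have h1 : ((q - 3) %/ 4 = m)%N by rewrite hq addnK mulKn.
by rewrite /cols Hod Hmod /= h1.
Qed.

Lemma mem_cols_3 s : s \in cols q ->
  s = C0 \/ s = Dcol 1 \/ s = Dcol 2 \/ (exists k, s = Acol k) \/ (exists k, s = Bcol k) \/ s = Ecol.
Proof.
rewrite colsE_3 !mem_cat !inE => /orP[/eqP->|/orP[/orP[/eqP->|/eqP->]|/orP[/mapP[k _ ->]|/orP[/mapP[k _ ->]|/eqP->]]]].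
- by left.
- by right; left.
- by right; right; left.
- by right; right; right; left; exists k.
- by right; right; right; right; left; exists k.
- by right; right; right; right; right.
Qed.

Lemma t3_uniq : uniq (rows q). Proof. by rewrite rowsE_3 uniq_rgen. Qed.

Lemma t3_size : size (rows q) = size (cols q).
Proof. rewrite rowsE_3 colsE_3 /rgen !size_cat !size_map /range1 !size_iota /=; lia. Qed.

Lemma t3_Triv : Triv \in rows q. Proof. by rewrite rowsE_3 /rgen !mem_cat !inE eqxx. Qed.
Lemma t3_Xq : Xq \in rows q. Proof. by rewrite rowsE_3 /rgen !mem_cat !inE eqxx !orbT. Qed.

Lemma t3_L4 s : s \in cols q -> s != C0 -> exists2 x, x \in rows q & ~~ (0 < lam q x s).
Proof.
move=> /mem_cols_3 [->|[->|[->|[[k ->]|[[k ->]|->]]]]]; rewrite ?eqxx // => _.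
- by exists Xq; [exact: t3_Xq | rewrite /lam Hod Hmod /= ltxx].
- by exists Xq; [exact: t3_Xq | rewrite /lam Hod Hmod /= ltxx].
- exists (Xh 1); last by rewrite /lam Hod Hmod /= ltxx.
  by rewrite rowsE_3 /rgen !mem_cat map_f ?orbT.
- by exists Xq; [exact: t3_Xq | rewrite /lam Hod Hmod /= ltr0N1].
- by exists Xq; [exact: t3_Xq | rewrite /lam Hod Hmod /= ltr0N1].
Qed.

Lemma t3_L5 x : x \in rows q -> x != Triv -> 1 < lam q x C0.
Proof.
rewrite rowsE_3 => /mem_rgen [->|[[k -> /andP[k1 k0]]|[[k ->]|[->|[k ->]]]]]; rewrite ?eqxx // => _.
- by rewrite /lam Hod Hmod /= ltr1n hq; rewrite (_ : (4 * m + 3 - 1) = 2 * (2 * m + 1))%N ?mulKn; lia.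
- by rewrite /lam Hod Hmod /= ltr1n hq; lia.
- by rewrite /lam Hod Hmod /= ltr1n hq; lia.
- by rewrite /lam Hod Hmod /= ltr1n hq; lia.
Qed.

Lemma t3_ord : \sum_(x <- rows q) lam q x C0 ^+ 2 = (q * ((2 * m + 1) * (4 * m + 4)))%:R.
Proof.
rewrite rowsE_3 sum_rgen /lam Hod Hmod /= !sum_const_seq /range1 !size_iota.
rewrite -!natrX -!mulrnA expr1n (_ : 1 = 1%:R) // -!natrD; congr (_ %:R).
rewrite hq (_ : (4 * m + 3 - 1 = 2 * (2 * m + 1))%N); last by lia.
rewrite mulKn //; nia.
Qed.

Lemma t3_cop p : prime p -> (p %| q)%N -> ~~ (p %| (2 * m + 1) * (4 * m + 4))%N.
Proof.
move=> pp pq; rewrite Euclid_dvdM //; rewrite hq in pq; apply/negP => /orP[H|H].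
- have H2 : (p %| 2 * (2 * m + 1))%N by rewrite dvdn_mull.
  move: pq; rewrite (_ : (4 * m + 3 = 2 * (2 * m + 1) + 1)%N); last by lia.
  by rewrite dvdn_addr // dvdn1 => /eqP E; move: (prime_gt1 pp); rewrite E.
- move: H; rewrite (_ : (4 * m + 4 = (4 * m + 3) + 1)%N); last by lia.
  by rewrite dvdn_addr // dvdn1 => /eqP E; move: (prime_gt1 pp); rewrite E.
Qed.

Lemma t3_Xq0 : lam q Xq C0 = q%:R. Proof. by rewrite /lam Hod Hmod. Qed.

Lemma t3_L7 s : s \in cols q -> s != C0 -> lam q Xq s = 0 \/ lam q Xq s = 1 \/ lam q Xq s = -1.
Proof.
move=> /mem_cols_3 [->|[->|[->|[[k ->]|[[k ->]|->]]]]]; rewrite ?eqxx // => _;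
  rewrite /lam Hod Hmod /=; by auto.
Qed.

Lemma t3_L8 : exists s1 s2, forall s, s \in cols q -> s != C0 -> lam q Xq s = 0 -> s = s1 \/ s = s2.
Proof.
exists (Dcol 1), (Dcol 2) => s /mem_cols_3 [->|[->|[->|[[k ->]|[[k ->]|->]]]]]; rewrite ?eqxx // => _;
  rewrite /lam Hod Hmod /=; auto.
- by move/eqP; rewrite oner_eq0.
- by move/eqP; rewrite oppr_eq0 oner_eq0.
- by move/eqP; rewrite oppr_eq0 oner_eq0.
Qed.

Lemma t3_L9 s : s \in cols q -> s != C0 -> lam q Xq s = 0 -> cnorm q s = q%:R.
Proof.
have key k : cnorm q (Dcol k) = q%:R.
  rewrite /cnorm rowsE_3 sum_rgen /lam Hod Hmod /= !sum_const_seq /range1 !size_iota /=.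
  rewrite !big_cons big_nil addr0 !nrmD3 ?ler0n // normrN1 normr0 normr1 !expr1n expr0n /= addr0.
  rewrite hq natrD natrM; field; by rewrite ?pnatr_eq0.
move=> /mem_cols_3 [->|[->|[->|[[k ->]|[[k ->]|->]]]]]; rewrite ?eqxx ?key // => _;
  rewrite /lam Hod Hmod /=.
- by move/eqP; rewrite oner_eq0.
- by move/eqP; rewrite oppr_eq0 oner_eq0.
- by move/eqP; rewrite oppr_eq0 oner_eq0.
Qed.

Lemma t3_facts : Facts q.
Proof.
split; first exact: t3_uniq. split; first exact: t3_size.
split; first exact: t3_Triv. split; first exact: t3_L4.
split; first exact: t3_L5. split; first exact: t3_Xq.
split; first by rewrite hq; lia.
split; first by exists ((2 * m + 1) * (4 * m + 4)); split; [exact: t3_ord | exact: t3_cop].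
split; first exact: t3_Xq0. split; first exact: t3_L7.
split; first exact: t3_L8. exact: t3_L9.
Qed.

End Three.


Section One.
Variables (q n : nat).
Hypothesis hq : q = (4 * n + 5)%N.

Let Hod : odd q = true. Proof. by rewrite hq oddD oddM. Qed.
Let Hmod : (q %% 4 == 3)%N = false.
Proof. by rewrite hq (_ : (4 * n + 5 = (n + 1) * 4 + 1)%N) ?modnMDl //; lia. Qed.

Lemma rowsE_1 : rows q = rgen 2 (n + 1) n.
Proof.
have h1 : ((q - 1) %/ 4 = n + 1)%N.
  by rewrite (_ : (q - 1 = 4 * (n + 1))%N) ?mulKn //; lia.
have h2 : ((q - 5) %/ 4 = n)%N by rewrite hq addnK mulKn.
by rewrite /rows Hod Hmod /= h1 h2.
Qed.

Lemma colsE_1 : cols q = [:: C0] ++ map Dcol (range1 2) ++ map Acol (range1 n)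
      ++ [:: Ecol] ++ map Bcol (range1 (n + 1)).
Proof.
have h1 : ((q - 1) %/ 4 = n + 1)%N.
  by rewrite (_ : (q - 1 = 4 * (n + 1))%N) ?mulKn //; lia.
have h2 : ((q - 5) %/ 4 = n)%N by rewrite hq addnK mulKn.
by rewrite /cols Hod Hmod /= h1 h2.
Qed.

Lemma mem_cols_1 s : s \in cols q ->
  s = C0 \/ s = Dcol 1 \/ s = Dcol 2 \/ (exists k, s = Acol k) \/ (exists k, s = Bcol k) \/ s = Ecol.
Proof.
rewrite colsE_1 !mem_cat !inE => /orP[/eqP->|/orP[/orP[/eqP->|/eqP->]|/orP[/mapP[k _ ->]|/orP[/eqP->|/mapP[k _ ->]]]]].
- by left.
- by right; left.
- by right; right; left.
- by right; right; right; left; exists k.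
- by right; right; right; right; right.
- by right; right; right; right; left; exists k.
Qed.

Lemma t1_uniq : uniq (rows q). Proof. by rewrite rowsE_1 uniq_rgen. Qed.

Lemma t1_size : size (rows q) = size (cols q).
Proof. rewrite rowsE_1 colsE_1 /rgen !size_cat !size_map /range1 !size_iota /=; lia. Qed.

Lemma t1_Triv : Triv \in rows q. Proof. by rewrite rowsE_1 /rgen !mem_cat !inE eqxx. Qed.
Lemma t1_Xq : Xq \in rows q. Proof. by rewrite rowsE_1 /rgen !mem_cat !inE eqxx !orbT. Qed.
Lemma t1_Xm1 : Xm 1 \in rows q.
Proof. by rewrite rowsE_1 /rgen !mem_cat map_f ?orbT // /range1 mem_iota; lia. Qed.

Lemma t1_L4 s : s \in cols q -> s != C0 -> exists2 x, x \in rows q & ~~ (0 < lam q x s).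
Proof.
move=> /mem_cols_1 [->|[->|[->|[[k ->]|[[k ->]|->]]]]]; rewrite ?eqxx // => _.
- by exists Xq; [exact: t1_Xq | rewrite /lam Hod Hmod /= ltxx].
- by exists Xq; [exact: t1_Xq | rewrite /lam Hod Hmod /= ltxx].
- by exists (Xm 1); [exact: t1_Xm1 | rewrite /lam Hod Hmod /= ltxx].
- by exists Xq; [exact: t1_Xq | rewrite /lam Hod Hmod /= ltr0N1].
- by exists (Xm 1); [exact: t1_Xm1 | rewrite /lam Hod Hmod /= ltxx].
Qed.

Lemma t1_L5 x : x \in rows q -> x != Triv -> 1 < lam q x C0.
Proof.
rewrite rowsE_1 => /mem_rgen [->|[[k -> /andP[k1 k0]]|[[k ->]|[->|[k ->]]]]]; rewrite ?eqxx // => _.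
- by rewrite /lam Hod Hmod /= ltr1n hq; rewrite (_ : (4 * n + 5 + 1) = 2 * (2 * n + 3))%N ?mulKn; lia.
- by rewrite /lam Hod Hmod /= ltr1n hq; lia.
- by rewrite /lam Hod Hmod /= ltr1n hq; lia.
- by rewrite /lam Hod Hmod /= ltr1n hq; lia.
Qed.

Lemma t1_ord : \sum_(x <- rows q) lam q x C0 ^+ 2 = (q * ((4 * n + 4) * (2 * n + 3)))%:R.
Proof.
rewrite rowsE_1 sum_rgen /lam Hod Hmod /= !sum_const_seq /range1 !size_iota.
rewrite -!natrX -!mulrnA expr1n (_ : 1 = 1%:R) // -!natrD; congr (_ %:R).
rewrite hq (_ : (4 * n + 5 + 1 = 2 * (2 * n + 3))%N); last by lia.
rewrite (_ : (4 * n + 5 - 1 = 4 * n + 4)%N); last by lia.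
rewrite mulKn //; nia.
Qed.

Lemma t1_cop p : prime p -> (p %| q)%N -> ~~ (p %| (4 * n + 4) * (2 * n + 3))%N.
Proof.
move=> pp pq; rewrite Euclid_dvdM //; rewrite hq in pq; apply/negP => /orP[H|H].
- move: pq; rewrite (_ : (4 * n + 5 = (4 * n + 4) + 1)%N); last by lia.
  by rewrite dvdn_addr // dvdn1 => /eqP E; move: (prime_gt1 pp); rewrite E.
- have H2 : (p %| 2 * (2 * n + 3))%N by rewrite dvdn_mull.
  move: H2; rewrite (_ : (2 * (2 * n + 3) = (4 * n + 5) + 1)%N); last by lia.
  by rewrite dvdn_addr // dvdn1 => /eqP E; move: (prime_gt1 pp); rewrite E.
Qed.

Lemma t1_Xq0 : lam q Xq C0 = q%:R. Proof. by rewrite /lam Hod Hmod. Qed.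

Lemma t1_L7 s : s \in cols q -> s != C0 -> lam q Xq s = 0 \/ lam q Xq s = 1 \/ lam q Xq s = -1.
Proof.
move=> /mem_cols_1 [->|[->|[->|[[k ->]|[[k ->]|->]]]]]; rewrite ?eqxx // => _;
  rewrite /lam Hod Hmod /=; by auto.
Qed.

Lemma t1_L8 : exists s1 s2, forall s, s \in cols q -> s != C0 -> lam q Xq s = 0 -> s = s1 \/ s = s2.
Proof.
exists (Dcol 1), (Dcol 2) => s /mem_cols_1 [->|[->|[->|[[k ->]|[[k ->]|->]]]]]; rewrite ?eqxx // => _;
  rewrite /lam Hod Hmod /=; auto.
- by move/eqP; rewrite oner_eq0.
- by move/eqP; rewrite oppr_eq0 oner_eq0.
- by move/eqP; rewrite oner_eq0.
Qed.

Lemma t1_L9 s : s \in cols q -> s != C0 -> lam q Xq s = 0 -> cnorm q s = q%:R.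
Proof.
have key k : cnorm q (Dcol k) = q%:R.
  rewrite /cnorm rowsE_1 sum_rgen /lam Hod Hmod /= !sum_const_seq /range1 !size_iota /=.
  rewrite !big_cons big_nil addr0 (_ : (k + 2 = (k + 1).+1)%N); last by lia.
  rewrite sgnS nrmD1 ?ler0n ?sgn_sq ?sgn_real //.
  rewrite normrN1 normr0 normr1 !expr1n expr0n /= addr0.
  rewrite hq natrD natrM; field; by rewrite ?pnatr_eq0.
move=> /mem_cols_1 [->|[->|[->|[[k ->]|[[k ->]|->]]]]]; rewrite ?eqxx ?key // => _;
  rewrite /lam Hod Hmod /=.
- by move/eqP; rewrite oner_eq0.
- by move/eqP; rewrite oppr_eq0 oner_eq0.
- by move/eqP; rewrite oner_eq0.
Qed.

Lemma t1_facts : Facts q.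
Proof.
split; first exact: t1_uniq. split; first exact: t1_size.
split; first exact: t1_Triv. split; first exact: t1_L4.
split; first exact: t1_L5. split; first exact: t1_Xq.
split; first by rewrite hq; lia.
split; first by exists ((4 * n + 4) * (2 * n + 3)); split; [exact: t1_ord | exact: t1_cop].
split; first exact: t1_Xq0. split; first exact: t1_L7.
split; first exact: t1_L8. exact: t1_L9.
Qed.

End One.

End Helpers.
Import Helpers.

Theorem lemma4p2 (q : nat) :
  (2 <= q)%N -> ~ (exists p k : nat, prime p /\ q = (p ^ k)%N) ->
  forall (gT : finGroupType) (G : {group gT}), ~ fusion_iso_Rep q G.
Proof.
move=> q2 npp gT G [f [injf surjf HN]].
pose p := pdiv q; have pp : prime p := pdiv_prime q2; have pq : (p %| q)%N := pdiv_dvd q.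
have : has (fun r => [&& prime r, (r %| q)%N & r != p]) (iota 0 q.+1).
  apply/negPn/negP => /hasPn H; apply: npp.
  have : p.-nat q.
    apply/pnatP => [|l pl lq]; first lia.
    have lq' : (l < q.+1)%N by rewrite ltnS dvdn_leq //; lia.
    have := H l; rewrite mem_iota /= lq' pl lq /= negbK => /(_ isT) /eqP ->.
    by rewrite inE.
  by case/p_natP => k ->; exists p, k.
case/hasP => r _ /and3P[pr rq rp].
have pnr : p != r by rewrite eq_sym.
have q6 : (6 <= q)%N.
  rewrite leqNgt; apply/negP => lt6.
  have : q = 2 \/ q = 3 \/ q = 4 \/ q = 5 by lia.
  by case=> [E|[E|[E|E]]]; apply: npp; [exists 2, 1 | exists 3, 1 | exists 2, 2 | exists 5, 1]; rewrite E.
have q0 : (0 < q)%N by lia.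
have dq := divn_eq q 4.
case: (boolP (odd q)) => Hod.
- case: (boolP (q %% 4 == 3)%N) => H3.
  + have hq : q = (4 * (q %/ 4) + 3)%N by rewrite {1}dq (eqP H3) mulnC.
    have m1 : (1 <= q %/ 4)%N by lia.
    exact: (final' (t3_facts hq m1) injf surjf HN pp pr pq rq pnr).
  + have H1 : (q %% 4 = 1)%N.
      have := ltn_pmod q (isT : (0 < 4)%N); move: H3 Hod; rewrite {2}dq oddD oddM /=.
      rewrite andbF /=; move: (q %% 4)%N => k; by case: k => [|[|[|[|k]]]].
    have hq : q = (4 * (q %/ 4 - 1) + 5)%N by lia.
    exact: (final' (t1_facts hq) injf surjf HN pp pr pq rq pnr).
- have hq : q = (2 * (q %/ 2 - 3 + 3))%N.
    have := divn_eq q 2; rewrite modn2 (negPf Hod) addn0; lia.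
  exact: (final' (ev_facts hq) injf surjf HN pp pr pq rq pnr).
Qed.
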